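(* Let $\mathcal A\colon\bigcup_{n,m\ge1}Z^{(n,m)}\to\mathcal F$ be any representation learner and $\alpha>0$, $\nu>0$. Then, with $(\mathbf z,\vec P)$ generated by the $(n,m)$-sampling process from the environment $Q$, $$\Pr\left\{(\mathbf z,\vec P):d_\nu\big(E^*_{\mathcal G}(\mathcal A(\mathbf z),\mathbf z),E^*_{\mathcal G}(\mathcal A(\mathbf z),\vec P)\big)>\alpha\right\}\le\Pr\left\{(\mathbf z,\vec P):\exists\,\vec g\in\mathcal G^n,f\in\mathcal F,\ d_\nu\big(E(\vec g\circ\bar f,\mathbf z),E(\vec g\circ\bar f,\vec P)\big)>\alpha\right\}.$$
   Context: $X,Y,A,V$ sets, $Z=X\times Y$, $\mathcal F$ maps $X\to V$, $\mathcal G$ maps $V\to A$, $l\colon Y\times A\to[0,M]$, $l_{g\circ f}(x,y)=l(y,g(f(x)))$. $Q$ is a probability measure on a set $\mathbb P$ of probability measures on $Z$ (with respect to which all $l_{g\circ f}$ are measurable). $(n,m)$-sampling: draw $\vec P=(P_1,\dots,P_n)$ independently according to $Q$, then for each $i$ draw $z_{i1},\dots,z_{im}$ independently from $P_i$, forming $\mathbf z=(z_{ij})\in Z^{(n,m)}$. $E^*_{\mathcal G}(f,\mathbf z)=\frac1n\sum_i\inf_{g\in\mathcal G}\frac1m\sum_j l_{g\circ f}(z_{ij})$; $E^*_{\mathcal G}(f,\vec P)=\frac1n\sum_i\inf_{g\in\mathcal G}\int l_{g\circ f}dP_i$. For $\vec g=(g_1,\dots,g_n)\in\mathcal G^n$: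 $E(\vec g\circ\bar f,\mathbf z)=\frac1{nm}\sum_{i,j}l_{g_i\circ f}(z_{ij})$, $E(\vec g\circ\bar f,\vec P)=\frac1n\sum_i\int l_{g_i\circ f}dP_i$. $d_\nu(x,y)=\frac{|x-y|}{\nu+x+y}$. All events are assumed measurable. *)

(* Defs.v *)
From HB Require Import structures.
From mathcomp Require Import all_boot all_order all_algebra.
From mathcomp Require Import all_classical all_reals all_analysis.
Set Implicit Arguments. Unset Strict Implicit. Unset Printing Implicit Defensive.
Import Order.TTheory GRing.Theory Num.Theory.
Local Open Scope classical_set_scope.
Local Open Scope ring_scope.

Definition vnil (T : Type) : 'I_0 -> T :=
  fun i => False_rect T (@eq_ind bool false (fun b => if b then False else True) I true (ltn_ord i)).

Definition vcons (T : Type) (n : nat) (t : T) (v : 'I_n -> T) : 'I_n.+1 -> T :=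
  fun i => match unlift ord0 i with Some j => v j | None => t end.

(* Iterated integral over n coordinates: coordinate i (outermost first) is
   integrated by the integration functional I i. *)
Fixpoint iter_int (R : realType) (T : Type) (n : nat) :
  ('I_n -> (T -> \bar R) -> \bar R) -> (('I_n -> T) -> \bar R) -> \bar R :=
  match n with
  | 0 => fun _ h => h (@vnil T)
  | n'.+1 => fun I h =>
      I ord0 (fun t => @iter_int R T n' (fun j => I (lift ord0 j))
                                    (fun v => h (vcons t v)))
  end.

Section Baxter.
Context (R : realType) (dX dY : measure_display)
        (X : measurableType dX) (Y : measurableType dY) (V A : Type).

Local Notation Z := (X * Y)%type.
Local Notation PZ := (pprobability Z R).

Definition lgf (l : Y -> A -> R) (g : V -> A) (f : X -> V) : Z -> R :=
  fun z => l z.2 (g (f z.1)).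

Definition d_nu (nu x y : R) : R := `|x - y| / (nu + x + y).

Definition Estar_emp (l : Y -> A -> R) (G : set (V -> A)) (n m : nat)
    (f : X -> V) (z : 'I_n -> 'I_m -> Z) : R :=
  n%:R^-1 * \sum_(i < n)
    inf [set (m%:R^-1 * \sum_(j < m) lgf l g f (z i j)) | g in G].

Definition Estar_true (l : Y -> A -> R) (G : set (V -> A)) (n : nat)
    (f : X -> V) (P : 'I_n -> PZ) : R :=
  n%:R^-1 * \sum_(i < n)
    inf [set Rintegral (P i : probability Z R) setT (lgf l g f) | g in G].

Definition E_emp (l : Y -> A -> R) (n m : nat) (gv : 'I_n -> V -> A)
    (f : X -> V) (z : 'I_n -> 'I_m -> Z) : R :=
  (n * m)%:R^-1 * \sum_(i < n) \sum_(j < m) lgf l (gv i) f (z i j).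

Definition E_true (l : Y -> A -> R) (n : nat) (gv : 'I_n -> V -> A)
    (f : X -> V) (P : 'I_n -> PZ) : R :=
  n%:R^-1 * \sum_(i < n) Rintegral (P i : probability Z R) setT (lgf l (gv i) f).

(* Probability of an event S about (z, P) under the (n,m)-sampling process:
   P_1, ..., P_n drawn independently from Q, then, given P, for each i the
   points z_i1, ..., z_im drawn independently from P_i.  Written as the
   iterated integral of the indicator of S in exactly this order. *)
Definition sample_prob (Q : probability PZ R) (n m : nat)
    (S : set (('I_n -> 'I_m -> Z) * ('I_n -> PZ))) : \bar R :=
  @iter_int R PZ n (fun _ (h : PZ -> \bar R) => (\int[Q]_p h p)%E)
    (fun P : 'I_n -> PZ =>
       @iter_int R ('I_m -> Z) n
         (fun i (h : ('I_m -> Z) -> \bar R) =>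
            @iter_int R Z m (fun _ (k : Z -> \bar R) =>
                          (\int[(P i : probability Z R)]_x k x)%E) h)
         (fun z : 'I_n -> 'I_m -> Z => (\1_S (z, P))%:E)).

End Baxter.
Arguments sample_prob {R dX dY X Y} Q n m S.

(* Main.v *)
From HB Require Import structures.
From mathcomp Require Import all_boot all_order all_algebra.
From mathcomp Require Import all_classical all_reals all_analysis.
From mathcomp Require Import ring lra.
Require Import Defs.
Import Order.TTheory GRing.Theory Num.Theory.
Local Open Scope classical_set_scope.
Local Open Scope ring_scope.

Lemma dnuC (R : realType) (nu x y : R) : d_nu nu x y = d_nu nu y x.
Proof. by rewrite /d_nu distrC -addrA (addrC x) addrA. Qed.

Lemma dnu_approx (R : realType) (nu x y alpha : R) : 0 < nu -> 0 <= x -> 0 <= y ->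
  0 < alpha -> alpha < d_nu nu x y -> x <= y ->
  exists2 eps, 0 < eps & forall x' y', 0 <= x' -> x' < x + eps -> y <= y' ->
     alpha < d_nu nu x' y'.
Proof.
move=> nu0 x0 y0 a0; rewrite /d_nu => h xy.
have den : 0 < nu + x + y by lra.
move: h; rewrite ltr_pdivlMr // distrC ger0_norm ?subr_ge0 // => h.
have a1 : alpha < 1.
  have : alpha * (nu + x + y) < 1 * (nu + x + y) by lra.
  by rewrite ltr_pM2r.
exists ((y - x - alpha * (nu + x + y)) / (2 * (1 + alpha))).
  by apply: divr_gt0; lra.
move=> x' y' x'0 hx hy.
set e := (y - x - alpha * (nu + x + y)) / (2 * (1 + alpha)) in hx.
have he : (1 + alpha) * e * 2 = y - x - alpha * (nu + x + y).
  rewrite /e; field; lra.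
have den' : 0 < nu + x' + y' by lra.
rewrite ltr_pdivlMr // distrC.
have : alpha * (nu + x' + y') < y' - x'.
  have h1 : 0 <= (1 - alpha) * (y' - y) by apply: mulr_ge0; lra.
  have h2 : (1 + alpha) * (x' - x) < (1 + alpha) * e by rewrite ltr_pM2l; lra.
  nra.
move=> hh; apply: lt_le_trans hh _; exact: ler_norm.
Qed.

Lemma avg_pick (R : realType) (B : Type) (G : set B) (n : nat) (hn : (0 < n)%N)
  (c d : 'I_n -> B -> R) (g0 : B) (hg0 : G g0)
  (c0 : forall i g, 0 <= c i g) (d0 : forall i g, 0 <= d i g) (eps : R) (he : 0 < eps) :
  exists gv : 'I_n -> B, (forall i, G (gv i)) /\
   n%:R^-1 * \sum_(i < n) c i (gv i) < n%:R^-1 * \sum_(i < n) inf [set c i g | g in G] + eps /\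
   n%:R^-1 * \sum_(i < n) inf [set d i g | g in G] <= n%:R^-1 * \sum_(i < n) d i (gv i).
Proof.
have hinf : forall i, has_inf [set c i g | g in G].
  move=> i; split; first by exists (c i g0), g0.
  by exists 0 => _ [g _ <-].
have : forall i, exists g, G g /\ c i g < inf [set c i g | g in G] + eps.
  move=> i; have [_ [g Gg <-] hlt] := inf_adherent he (hinf i).
  by exists g.
move=> /choice [gv hgv]; exists gv; split; first by move=> i; case: (hgv i).
have n0 : 0 < n%:R^-1 :> R by rewrite invr_gt0 ltr0n.
split.
  have -> : n%:R^-1 * \sum_(i < n) inf [set c i g | g in G] + eps =
            n%:R^-1 * \sum_(i < n) (inf [set c i g | g in G] + eps).
    rewrite big_split /= sumr_const card_ord mulrDr; congr (_ + _).
    by rewrite -(mulr_natr eps) mulrCA mulVf ?mulr1 // pnatr_eq0 -lt0n.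
  rewrite ltr_pM2l //; apply: ltr_sum; first by apply/hasP; exists (Ordinal hn); rewrite ?mem_index_enum.
  by move=> i _; case: (hgv i).
rewrite ler_pM2l //; apply: ler_sum => i _.
apply: ge_inf; first by exists 0 => _ [g _ <-].
by exists (gv i) => //; case: (hgv i).
Qed.

Section IM.
Local Open Scope ereal_scope.
Lemma int_mono d (T : measurableType d) (R : realType) (mu : {measure set T -> \bar R})
  (f g : T -> \bar R) : (forall x, 0 <= f x)%E -> (forall x, f x <= g x)%E ->
  (\int[mu]_x f x <= \int[mu]_x g x)%E.
Proof.
move=> f0 fg.
have g0 : forall x, (0 <= g x)%E by move=> x; exact: le_trans (f0 x) (fg x).
rewrite /integral !patch_setT.
have -> : f^\- = cst 0 by apply/funext => x; apply: (@ge0_funenegE _ _ setT) => //; rewrite inE.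
have -> : g^\- = cst 0 by apply/funext => x; apply: (@ge0_funenegE _ _ setT) => //; rewrite inE.
have -> : f^\+ = f by apply/funext => x; apply: (@ge0_funeposE _ _ setT) => //; rewrite inE.
have -> : g^\+ = g by apply/funext => x; apply: (@ge0_funeposE _ _ setT) => //; rewrite inE.
apply: leeB => //.
apply: ereal_sup_le => _ [h hf <-].
by exists h => // x; exact: le_trans (hf x) (fg x).
Qed.
End IM.


Arguments dnu_approx {R nu x y alpha}.
Arguments avg_pick {R B G n} hn {c d} g0 hg0 c0 d0 {eps} he.

Arguments int_mono {d T R mu f g}.

Lemma iter_int_mono (R : realType) (T : Type) (n : nat) :
  forall (I : 'I_n -> (T -> \bar R) -> \bar R),
  (forall i h, (forall t, 0 <= h t)%E -> (0 <= I i h)%E) ->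
  (forall i h1 h2, (forall t, 0 <= h1 t)%E -> (forall t, h1 t <= h2 t)%E -> (I i h1 <= I i h2)%E) ->
  forall h1 h2, (forall v, 0 <= h1 v)%E -> (forall v, h1 v <= h2 v)%E ->
    (0 <= iter_int I h1)%E /\ (iter_int I h1 <= iter_int I h2)%E.
Proof.
elim: n => [|n IH] I I0 Im h1 h2 h10 h12 /=; first by split.
have H t := IH (fun j => I (lift ord0 j)) (fun j => I0 _) (fun j => Im _)
   (fun v => h1 (vcons t v)) (fun v => h2 (vcons t v)) (fun v => h10 _) (fun v => h12 _).
split; first by apply: I0 => t; case: (H t).
by apply: Im => t; case: (H t).
Qed.
Arguments iter_int_mono {R T n I}.
Theorem lemma3p3 (R : realType) (dX dY : measure_display)
    (X : measurableType dX) (Y : measurableType dY) (V A : Type)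
    (F : set (X -> V)) (G : set (V -> A))
    (l : Y -> A -> R) (M : R)
    (hl : forall y a, 0 <= l y a <= M)
    (hmeas : forall g f, G g -> F f -> measurable_fun setT (lgf l g f))
    (Q : probability (pprobability (X * Y)%type R) R)
    (n m : nat) (hn : (0 < n)%N) (hm : (0 < m)%N)
    (Alg : ('I_n -> 'I_m -> (X * Y)%type) -> X -> V)
    (hAlg : forall z, F (Alg z))
    (alpha nu : R) (halpha : 0 < alpha) (hnu : 0 < nu) :
  (sample_prob Q n m
     [set zP | (alpha < d_nu nu (Estar_emp l G (Alg zP.1) zP.1)
                                (Estar_true l G (Alg zP.1) zP.2))%R]
   <= sample_prob Q n m
     [set zP | exists gv : 'I_n -> V -> A, exists f : X -> V,
                 (forall i, G (gv i)) /\ F f /\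
                 (alpha < d_nu nu (E_emp l gv f zP.1) (E_true l gv f zP.2))%R])%E.
Proof.
have incl : forall zP : (('I_n -> 'I_m -> (X * Y)%type) * ('I_n -> pprobability (X * Y)%type R))%type,
   (alpha < d_nu nu (Estar_emp l G (Alg zP.1) zP.1) (Estar_true l G (Alg zP.1) zP.2))%R ->
   exists gv : 'I_n -> V -> A, exists f : X -> V,
                 (forall i, G (gv i)) /\ F f /\
                 (alpha < d_nu nu (E_emp l gv f zP.1) (E_true l gv f zP.2))%R.
  move=> [z P] /=; set f := Alg z => H.
  pose a := fun (i : 'I_n) (g : V -> A) => m%:R^-1 * \sum_(j < m) lgf l g f (z i j).
  pose b := fun (i : 'I_n) (g : V -> A) => Rintegral (P i : probability _ R) setT (lgf l g f).
  have a0 : forall i g, 0 <= a i g.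
    move=> i g; apply: mulr_ge0; first by rewrite invr_ge0 ler0n.
    by apply: sumr_ge0 => j _; rewrite /lgf; move: (hl (z i j).2 (g (f (z i j).1))) => /andP[].
  have b0 : forall i g, 0 <= b i g.
    move=> i g; apply: fine_ge0; apply: integral_ge0 => x _.
    by rewrite lee_fin /lgf; move: (hl x.2 (g (f x.1))) => /andP[].
  have Eemp : forall gv, E_emp l gv f z = n%:R^-1 * \sum_(i < n) a i (gv i).
    move=> gv; rewrite /E_emp /a natrM invfM -mulrA; congr (_ * _).
    by rewrite mulr_sumr.
  have Etrue : forall gv, E_true l gv f P = n%:R^-1 * \sum_(i < n) b i (gv i) by [].
  case: (pselect (exists g, G g)) => [[g0 Gg0] | nG]; last first.
    have G0 : G = set0 by apply/seteqP; split => g //= Gg; apply: nG; exists g.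
    move: H; rewrite /Estar_emp /Estar_true G0.
    rewrite big1; last by move=> i _; rewrite image_set0 inf0.
    rewrite big1; last by move=> i _; rewrite image_set0 inf0.
    by rewrite mulr0 /d_nu subr0 normr0 mul0r => /(lt_trans halpha); rewrite ltxx.
  have infge0 : forall (c : 'I_n -> (V -> A) -> R), (forall i g, 0 <= c i g) ->
      0 <= n%:R^-1 * \sum_(i < n) inf [set c i g | g in G].
    move=> c c0; apply: mulr_ge0; first by rewrite invr_ge0 ler0n.
    apply: sumr_ge0 => i _; apply: lb_le_inf; first by exists (c i g0), g0.
    by move=> _ [g _ <-].
  have avgge0 : forall (c : 'I_n -> (V -> A) -> R), (forall i g, 0 <= c i g) ->
      forall gv, 0 <= n%:R^-1 * \sum_(i < n) c i (gv i).
    move=> c c0 gv; apply: mulr_ge0; first by rewrite invr_ge0 ler0n.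
    by apply: sumr_ge0.
  have x0 := infge0 a a0; have y0 := infge0 b b0.
  case: (lerP (Estar_emp l G f z) (Estar_true l G f P)) => hxy.
    have [eps eps0 heps] := dnu_approx hnu x0 y0 halpha H hxy.
    have [gv [Ggv [h1 h2]]] := avg_pick hn g0 Gg0 a0 b0 eps0.
    exists gv, f; split => //; split; first exact: hAlg.
    rewrite /= Eemp Etrue; apply: heps => //; exact: avgge0.
  rewrite dnuC in H.
  have [eps eps0 heps] := dnu_approx hnu y0 x0 halpha H (ltW hxy).
  have [gv [Ggv [h1 h2]]] := avg_pick hn g0 Gg0 b0 a0 eps0.
  exists gv, f; split => //; split; first exact: hAlg.
  rewrite /= dnuC Eemp Etrue; apply: heps => //; exact: avgge0.
have ind : forall w : (('I_n -> 'I_m -> (X * Y)%type) * ('I_n -> pprobability (X * Y)%type R))%type, ((\1_[set zP | (alpha < d_nu nu (Estar_emp l G (Alg zP.1) zP.1)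
                                (Estar_true l G (Alg zP.1) zP.2))%R] w : R)%:E <=
   (\1_[set zP | exists gv : 'I_n -> V -> A, exists f : X -> V,
                 (forall i, G (gv i)) /\ F f /\
                 (alpha < d_nu nu (E_emp l gv f zP.1) (E_true l gv f zP.2))%R] w : R)%:E)%E.
  move=> w; rewrite lee_fin /indic.
  case: (boolP (w \in _)) => [/set_mem /incl h|_]; last by case: (_ \in _).
  by rewrite mem_set.
have inner : forall (P : 'I_n -> pprobability (X * Y)%type R) h1 h2,
    (forall v, 0 <= h1 v)%E -> (forall v, h1 v <= h2 v)%E ->
    (0 <= @iter_int R ('I_m -> (X * Y)%type) n
         (fun i (h : ('I_m -> (X * Y)%type) -> \bar R) =>
            @iter_int R (X * Y)%type m (fun _ (k : (X * Y)%type -> \bar R) =>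
                          (\int[(P i : probability _ R)]_x k x)%E) h) h1)%E /\
    (@iter_int R ('I_m -> (X * Y)%type) n
         (fun i (h : ('I_m -> (X * Y)%type) -> \bar R) =>
            @iter_int R (X * Y)%type m (fun _ (k : (X * Y)%type -> \bar R) =>
                          (\int[(P i : probability _ R)]_x k x)%E) h) h1 <=
     @iter_int R ('I_m -> (X * Y)%type) n
         (fun i (h : ('I_m -> (X * Y)%type) -> \bar R) =>
            @iter_int R (X * Y)%type m (fun _ (k : (X * Y)%type -> \bar R) =>
                          (\int[(P i : probability _ R)]_x k x)%E) h) h2)%E.
  move=> P h1 h2 h10 h12; apply: iter_int_mono => //.
  - move=> i h h0.
    apply: (proj1 (iter_int_mono _ _ _ _ h0 (fun _ => le_refl _))).
    + by move=> o k k0; apply: integral_ge0 => x _; exact: k0.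
    + by move=> o k1 k2 k0 k12; exact: int_mono.
  - move=> i k1 k2 k0 k12.
    apply: (proj2 (iter_int_mono _ _ _ _ k0 k12)).
    + by move=> o k k0'; apply: integral_ge0 => x _; exact: k0'.
    + by move=> o k1' k2' k0' k12'; exact: int_mono.
rewrite /sample_prob; apply: (proj2 (iter_int_mono _ _ _ _ _ _)).
- by move=> i h h0; apply: integral_ge0 => x _; exact: h0.
- by move=> i h1 h2 h0 h12; exact: int_mono.
- move=> P; apply: (proj1 (inner P _ _ _ (fun v => le_refl _))) => v.
  by rewrite lee_fin /indic; case: (_ \in _).
- move=> P; have [] := inner P _ _ _ (fun v => ind (v, P)) => //.
Qed.
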